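(* Let $(\Gamma,\rho)$ be a voltage graph with $\Gamma=(V,E)$ a rooted simple digraph on $V=\{v_1,\dots,v_N\}$ and voltage group $G$ a point group in dimension $k$, such that $G_i=G_i^*$ for some (and hence any) root $v_i$ of $\Gamma$. Let $V=\bigsqcup_{l=1}^m V_l$ be the $(\Gamma,\rho)$-adapted partition. Then: (1) Fix a vertex $v_i$. Two vertices $v_j,v_k$ lie in the same subset $V_l$ if and only if $\mathrm{Net}(v_i,v_j)=\mathrm{Net}(v_i,v_k)$. In particular $m=|\mathrm{Net}(v_i,V)|/|G_i|\le |G|/|G_i|$, with equality if and only if $(\Gamma,\rho)$ is nondegenerate. (2) Let $p(t)=(x_1(t),\dots,x_N(t))$ be a trajectory of the $G$-clustering dynamics $\dot x_i=\sum_{v_j\in\mathcal{N}^-(v_i)}a_{ij}(\rho(e_{ij})x_j-x_i)$ (with constants $a_{ij}>0$, $x_i\in\mathbb{R}^k$) converging to $p^*=(x_1^*,\dots,x_N^* )$. Then $x_i^*=x_j^*$ whenever $v_i$ and $v_j$ lie in the same subset $V_l$.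
   Context: Digraphs are simple; $e_{ij}$ denotes the edge $v_i\to v_j$; $\mathcal{N}^-(v_i)=\{v_j:e_{ij}\in E\}$. A voltage graph is $(\Gamma,\rho)$ with $\rho:E\to G$, $G$ finite with identity $\mathbf{1}$; a point group in dimension $k$ is a finite subgroup of $\mathrm{O}(k)$. A semi-walk is $w=v_{i_1}a_1\dots a_{n-1}v_{i_n}$ with each $a_j\in\{e_{i_ji_{j+1}},e_{i_{j+1}i_j}\}$; it is closed if $v_{i_1}=v_{i_n}$, a walk if every $a_j=e_{i_ji_{j+1}}$; a path is a walk with distinct vertices. Net voltage: $f(w)=\bar\rho(a_1)\cdots\bar\rho(a_{n-1})$ with $\bar\rho(a_j)=\rho(a_j)$ for forward edges and $\rho(a_j)^{-1}$ for backward ones ($f=\mathbf 1$ on a single vertex). $G_i$ (local group) is the set of $f(w)$ over closed semi-walks at $v_i$; $G_i^*$ (directed local group) is the set of $f(w)$ over closed walks at $v_i$. $\mathrm{Net}(v_i,v_j)=\{f(w): w$ a semi-walk from $v_i$ to $v_j\}$, $\mathrm{Net}(v_i,V)=\bigcup_{v_j\in V}\mathrm{Net}(v_i,v_j)$. $\Gamma$ is weakly connected if any two vertices are joined by a semi-walk; $(\Gamma,\rho)$ (weakly connected) is nondegenerate if $\mathrm{Net}(v_i,V)=G$ for some vertex $v_i$. $\Gamma$ is rooted if some vertex (a root) is reachable by a path from every vertex. The $(\Gamma,\rho)$-adapted partition of $V$ is the partition into equivalence classes where $v_i\sim v_j$ iff there is a semi-walk $w$ from $v_i$ to $v_j$ with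 $f(w)=\mathbf 1$. *)

(* Defs.v *)
From HB Require Import structures.
From mathcomp Require Import all_boot all_order all_algebra all_fingroup.
From mathcomp Require Import mxrepresentation.
From mathcomp Require Import boolp classical_sets reals topology normedtype derive.
Set Implicit Arguments. Unset Strict Implicit. Unset Printing Implicit Defensive.
Import Order.TTheory GRing.Theory Num.Theory.

(* A simple digraph on V = 'I_N is an irreflexive relation E : rel 'I_N;
   E i j means the edge e_ij : v_i -> v_j is present.
   A voltage assignment is rho : 'I_N -> 'I_N -> gT, only its values on
   edges (E i j) matter.

   A semi-walk starting at v is encoded as a list of steps (b, j):
   b = true : forward edge e_{c j} from the current vertex c to j,
   b = false: backward edge e_{j c} traversed from c to j. *)

Section Walks.
Variables (N : nat) (gT : finGroupType).
Variable (E : rel 'I_N) (rho : 'I_N -> 'I_N -> gT).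

Definition simple_digraph := irreflexive E.

Fixpoint semiwalk (c : 'I_N) (s : seq (bool * 'I_N)) : bool :=
  match s with
  | [::] => true
  | (b, j) :: s' => (if b then E c j else E j c) && semiwalk j s'
  end.

Definition is_walk (c : 'I_N) (s : seq (bool * 'I_N)) : bool :=
  semiwalk c s && all (fun st => st.1) s.

Definition sw_end (c : 'I_N) (s : seq (bool * 'I_N)) : 'I_N := last c (unzip2 s).

Definition sw_verts (c : 'I_N) (s : seq (bool * 'I_N)) : seq 'I_N := c :: unzip2 s.

Definition step_voltage (c : 'I_N) (st : bool * 'I_N) : gT :=
  if st.1 then rho c st.2 else (rho st.2 c)^-1%g.

Fixpoint net_voltage (c : 'I_N) (s : seq (bool * 'I_N)) : gT :=
  match s with
  | [::] => 1%g
  | st :: s' => (step_voltage c st * net_voltage st.2 s')%g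
  end.

Definition Net (i j : 'I_N) : {set gT} :=
  [set g | `[< exists s, [/\ semiwalk i s, sw_end i s = j & net_voltage i s = g] >]].

Definition NetV (i : 'I_N) : {set gT} := \bigcup_(j : 'I_N) Net i j.

Definition local_group (i : 'I_N) : {set gT} := Net i i.

Definition dir_local_group (i : 'I_N) : {set gT} :=
  [set g | `[< exists s, [/\ is_walk i s, sw_end i s = i & net_voltage i s = g] >]].

Definition weakly_connected : Prop :=
  forall i j : 'I_N, exists s, semiwalk i s /\ sw_end i s = j.

Definition is_path (c : 'I_N) (s : seq (bool * 'I_N)) : bool :=
  is_walk c s && uniq (sw_verts c s).

Definition is_root (r : 'I_N) : Prop :=
  forall i : 'I_N, exists s, is_path i s /\ sw_end i s = r.

Definition rooted : Prop := exists r, is_root r.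

Definition vg_nondegenerate (G : {set gT}) : Prop :=
  weakly_connected /\ exists i : 'I_N, NetV i = G.

Definition adapted_rel : rel 'I_N := fun i j =>
  `[< exists s, [/\ semiwalk i s, sw_end i s = j & net_voltage i s = 1%g] >].

Definition adapted_partition : {set {set 'I_N}} :=
  equivalence_partition adapted_rel [set: 'I_N].

End Walks.

(* the G-clustering dynamics, with the voltage group acting through
   the matrices rG g (rG a faithful orthogonal representation of G) *)
Definition clustering_rhs (R : realType) (N k : nat) (gT : finGroupType)
  (G : {group gT}) (rG : mx_representation R G k)
  (E : rel 'I_N) (rho : 'I_N -> 'I_N -> gT) (a : 'I_N -> 'I_N -> R)
  (x : 'I_N -> 'cV[R]_k) (i : 'I_N) : 'cV[R]_k :=
  (\sum_(j | E i j) a i j *: (rG (rho i j) *m x j - x i))%R.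

(* Main.v *)
Require Import Defs.
From HB Require Import structures.
From mathcomp Require Import all_boot all_order all_algebra all_fingroup.
From mathcomp Require Import mxrepresentation.
From mathcomp Require Import boolp classical_sets reals topology normedtype derive.
From mathcomp Require Import ring lra.
Import Order.TTheory GRing.Theory Num.Theory.
Import numFieldNormedType.Exports.
Local Open Scope classical_set_scope.
Set Implicit Arguments. Unset Strict Implicit. Unset Printing Implicit Defensive.
Section Comb.
Variables (N : nat) (gT : finGroupType) (E : rel 'I_N) (rho : 'I_N -> 'I_N -> gT).
Local Close Scope classical_set_scope.
Local Open Scope group_scope.
Implicit Types (c i j l : 'I_N) (s : seq (bool * 'I_N)) (b : bool).

Lemma sw_end_cons c b j s : sw_end c ((b, j) :: s) = sw_end j s.
Proof. by []. Qed.

Lemma semiwalk_cat c s1 s2 :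
  semiwalk E c (s1 ++ s2) = semiwalk E c s1 && semiwalk E (sw_end c s1) s2.
Proof. elim: s1 c => [|[b j] s IH] c //=. by rewrite IH andbA sw_end_cons. Qed.

Lemma sw_end_cat c s1 s2 : sw_end c (s1 ++ s2) = sw_end (sw_end c s1) s2.
Proof. by rewrite /sw_end /unzip2 map_cat last_cat. Qed.

Lemma net_cat c s1 s2 : net_voltage rho c (s1 ++ s2) =
  net_voltage rho c s1 * net_voltage rho (sw_end c s1) s2.
Proof.
elim: s1 c => [|[b j] s IH] c /=; first by rewrite mul1g.
by rewrite IH mulgA sw_end_cons.
Qed.

Fixpoint rev_sw (c : 'I_N) (s : seq (bool * 'I_N)) : seq (bool * 'I_N) :=
  match s with [::] => [::] | (b, j) :: s' => rev_sw j s' ++ [:: (~~ b, c)] end.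

Lemma rev_swP c s : semiwalk E c s ->
  [/\ semiwalk E (sw_end c s) (rev_sw c s), sw_end (sw_end c s) (rev_sw c s) = c
    & net_voltage rho (sw_end c s) (rev_sw c s) = (net_voltage rho c s)^-1].
Proof.
elim: s c => [|[b j] s IH] c /=; first by rewrite invg1.
move=> /andP[e sw]; have [h1 h2 h3] := IH j sw.
rewrite sw_end_cons semiwalk_cat sw_end_cat net_cat h1 h2 h3 /= invMg.
split => //; first by move: e; case: b => /= ->.
rewrite mulg1 /step_voltage /=; move: e; case: b => //= _; by rewrite invgK.
Qed.

Lemma NetP i j g : g \in Net E rho i j <->
  exists s, [/\ semiwalk E i s, sw_end i s = j & net_voltage rho i s = g].
Proof. by rewrite inE; split => [/asboolP|?]; [|apply/asboolP]. Qed.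

Lemma adaptedP i j : adapted_rel E rho i j <->
  exists s, [/\ semiwalk E i s, sw_end i s = j & net_voltage rho i s = 1].
Proof. by rewrite /adapted_rel; split => [/asboolP|?]; [|apply/asboolP]. Qed.

Lemma root_wc : rooted E -> weakly_connected E.
Proof.
move=> [r hr] i j.
have [s1 [/andP[/andP[w1 _] _] e1]] := hr i.
have [s2 [/andP[/andP[w2 _] _] e2]] := hr j.
have [h1 h2 _] := rev_swP w2.
exists (s1 ++ rev_sw j s2); rewrite semiwalk_cat sw_end_cat e1 -e2 w1 h1 h2.
by [].
Qed.

Lemma Net_nonempty i j : weakly_connected E -> exists g, g \in Net E rho i j.
Proof.
move=> wc; have [s [sw e]] := wc i j.
by exists (net_voltage rho i s); apply/NetP; exists s.
Qed.

Lemma net_in_G (G : {group gT}) c s : (forall i j, E i j -> rho i j \in G) ->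
  semiwalk E c s -> net_voltage rho c s \in G.
Proof.
move=> hG; elim: s c => [|[b j] s IH] c /=; first by rewrite group1.
move=> /andP[e sw]; rewrite groupM ?IH // /step_voltage /=.
by case: b e => /= e; rewrite ?groupV hG.
Qed.

Lemma Net_sub (G : {group gT}) i j : (forall i j, E i j -> rho i j \in G) ->
  Net E rho i j \subset G.
Proof.
by move=> hG; apply/fintype.subsetP => g /NetP [s [sw _ <-]]; apply: net_in_G.
Qed.

Lemma local_group_set i : group_set (local_group E rho i).
Proof.
apply/group_setP; split.
  by apply/NetP; exists [::].
move=> x y /NetP[s1 [w1 e1 <-]] /NetP[s2 [w2 e2 <-]].
apply/NetP; exists (s1 ++ s2).
by rewrite semiwalk_cat sw_end_cat net_cat e1 w1 w2 e2.
Qed.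

Lemma Net_coset i j g : g \in Net E rho i j ->
  Net E rho i j = local_group E rho i :* g.
Proof.
move=> /NetP[s [w e <-]]; apply/setP => y; rewrite mem_rcoset.
have [h1 h2 h3] := rev_swP w.
apply/idP/idP.
  move=> /NetP[s' [w' e' <-]]; apply/NetP; exists (s' ++ rev_sw i s).
  rewrite semiwalk_cat sw_end_cat net_cat e' w' -e h1 h2 h3; split => //.
move=> /NetP[c [wc ec hc]]; apply/NetP; exists (c ++ s).
rewrite semiwalk_cat sw_end_cat net_cat ec hc wc w e -mulgA mulVg mulg1.
by [].
Qed.

Lemma adapted_Net i j l : weakly_connected E ->
  adapted_rel E rho j l <-> Net E rho i j = Net E rho i l.
Proof.
move=> wc; split.
  move=> /adaptedP [w [sw ew fw]].
  have [h1 h2 h3] := rev_swP sw.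
  apply/setP => g; apply/idP/idP.
    move=> /NetP[s [ss es <-]]; apply/NetP; exists (s ++ w).
    by rewrite semiwalk_cat sw_end_cat net_cat es ss sw ew fw mulg1.
  move=> /NetP[s [ss es <-]]; apply/NetP; exists (s ++ rev_sw j w).
  by rewrite semiwalk_cat sw_end_cat net_cat es -ew ss h1 h2 h3 fw invg1 mulg1.
move=> eqN.
have [s0 [w0 e0]] := wc i j.
have : net_voltage rho i s0 \in Net E rho i l.
  by rewrite -eqN; apply/NetP; exists s0.
move=> /NetP[s1 [w1 e1 f1]].
have [h1 h2 h3] := rev_swP w0.
apply/adaptedP; exists (rev_sw i s0 ++ s1).
rewrite semiwalk_cat sw_end_cat net_cat -e0 h1 h2 h3 w1 e1 f1 mulVg.
by [].
Qed.


Lemma part1 (G : {group gT}) : (forall i j, E i j -> rho i j \in G) ->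
  weakly_connected E -> forall i : 'I_N,
  let P := adapted_partition E rho in
     (forall j l : 'I_N,
        (exists2 B, B \in P & (j \in B) && (l \in B)) <-> Net E rho i j = Net E rho i l)
     /\ #|P| = #|NetV E rho i| %/ #|local_group E rho i|
     /\ #|P| <= #|G| %/ #|local_group E rho i|
     /\ (#|P| = #|G| %/ #|local_group E rho i| <-> vg_nondegenerate E rho G).
Proof.
move=> hG wc i P.
set H := Group (local_group_set i).
have HG : (H : {set gT}) \subset G by apply: Net_sub.
have Hpos : 0 < #|H| by apply/card_gt0P; exists 1; rewrite group1.
have PE : P = [set [set y | Net E rho i y == Net E rho i x] | x in [set: 'I_N]].
  apply: eq_imset => x; apply/setP => y; rewrite !inE /=.
  by apply/idP/eqP => [/(adapted_Net i x y wc) ->|/esym /(adapted_Net i x y wc)].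
set Q := [set Net E rho i x | x in [set: 'I_N]].
have PQ : #|P| = #|Q|.
  rewrite PE (imset_comp (fun S => [set y | Net E rho i y == S])).
  apply: card_in_imset => _ _ /imsetP[x _ ->] /imsetP[z _ ->] eq.
  have : x \in [set y | Net E rho i y == Net E rho i z] by rewrite -eq inE.
  by rewrite inE => /eqP.
have partQ : finset.partition Q (NetV E rho i).
  apply/and3P; split.
  - rewrite cover_imset /NetV; apply/eqP; apply: eq_bigl => x; by rewrite inE.
  - apply/finset.trivIsetP => _ _ /imsetP[x _ ->] /imsetP[z _ ->] neq.
    rewrite -setI_eq0; apply/eqP/setP => g; rewrite finset.in_setI finset.in_set0.
    apply/negbTE/negP => /andP[g1 g2]; move/eqP: neq; apply.
    by rewrite (Net_coset g1) (Net_coset g2).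
  - apply/imsetP => -[x _ e0].
    have [g hg] := Net_nonempty i x wc.
    by move: hg; rewrite -e0 inE.
have cardNV : #|NetV E rho i| = (#|Q| * #|H|)%N.
  apply: card_uniform_partition partQ => _ /imsetP[x _ ->].
  have [g hg] := Net_nonempty i x wc.
  by rewrite (Net_coset hg) card_rcoset.
have PN : #|P| = #|NetV E rho i| %/ #|local_group E rho i|.
  by rewrite cardNV mulnK.
have NVG : NetV E rho i \subset G.
  by apply/bigcupsP => j _; apply: Net_sub.
split; last split => //; last split.
- move=> j l; split.
    rewrite PE => -[_ /imsetP[x _ ->]]; rewrite !inE => /andP[/eqP-> /eqP->].
    by [].
  move=> eq; exists [set y | Net E rho i y == Net E rho i j].
    by rewrite PE; apply/imsetP; exists j.
  by rewrite !inE eq !eqxx.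
- by rewrite PN leq_div2r // subset_leq_card.
- have dG : #|H| %| #|G| by apply: cardSg.
  split.
  + move=> eqc; split => //; exists i.
    apply/eqP; rewrite eqEcard NVG /= cardNV -PQ eqc divnK //.
  + move=> [_ [i' NV']].
    have NVi : NetV E rho i = G.
      apply/eqP; rewrite finset.eqEsubset NVG /=; apply/fintype.subsetP => y yG.
      have [g0 /NetP[s0 [w0 e0 f0]]] := Net_nonempty i i' wc.
      have : g0^-1 * y \in NetV E rho i'.
        rewrite NV' groupM ?groupV //.
        by rewrite -f0; apply: net_in_G.
      move=> /bigcupP[j _ /NetP[s [w e f]]].
      apply/bigcupP; exists j => //; apply/NetP; exists (s0 ++ s).
      by rewrite semiwalk_cat sw_end_cat net_cat e0 w0 w e f f0 mulKVg.
    by rewrite PQ -(mulnK #|Q| Hpos) -cardNV NVi.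
Qed.

End Comb.

Section Harm.
Local Close Scope classical_set_scope.
Local Open Scope ring_scope.
Variables (R : realType) (N k : nat) (gT : finGroupType) (G : {group gT})
  (rG : mx_representation R G k) (E : rel 'I_N) (rho : 'I_N -> 'I_N -> gT)
  (a : 'I_N -> 'I_N -> R).
Hypothesis hG : forall i j, E i j -> rho i j \in G.
Hypothesis ha : forall i j, E i j -> 0 < a i j.

Lemma harm_le (r : 'I_N) (y : 'I_N -> 'cV[R]_k) (p : 'I_k) :
  is_root E r -> local_group E rho r = dir_local_group E rho r ->
  (forall i, clustering_rhs rG E rho a y i = 0) ->
  forall i g, g \in Net E rho r i -> (rG g *m y i) p 0 <= (y r) p 0.
Proof.
move=> hr hloc heq.
pose h (v : 'I_N * gT) : R := (rG v.2 *m y v.1) p 0.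
pose K : {pred 'I_N * gT} := [pred v | v.2 \in Net E rho r v.1].
have Kin v : (v \in K) = (v.2 \in Net E rho r v.1) by [].
have K0 : (r, 1%g) \in K by rewrite Kin /=; apply/NetP; exists [::].
have KG v : v \in K -> v.2 \in G.
  by rewrite Kin => /(fintype.subsetP (Net_sub _ _ hG)); apply.
have Kstep i g j : (i, g) \in K -> E i j -> (j, (g * rho i j)%g) \in K.
  rewrite Kin /= => /NetP[s [w e f]] eij.
  rewrite Kin /=; apply/NetP.
  exists (s ++ [:: (true, j)]).
  by rewrite semiwalk_cat sw_end_cat net_cat e w /= eij f /step_voltage /= mulg1.
case: (arg_maxP h K0) => v0 Kv0 hmax.
set M := h v0.
have step v j : v \in K -> h v = M -> E v.1 j ->
    (j, (v.2 * rho v.1 j)%g) \in K /\ h (j, (v.2 * rho v.1 j)%g) = M.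
  case: v => i g /= Kv hv eij.
  split; first exact: Kstep.
  have gG : g \in G by apply: (KG (i, g)).
  have hsum : \sum_(l | E i l) a i l * (M - h (l, (g * rho i l)%g)) = 0.
    have H : (rG g *m clustering_rhs rG E rho a y i) p 0 = 0.
      by rewrite heq mulmx0 mxE.
    apply/eqP; rewrite -oppr_eq0 -sumrN; apply/eqP.
    apply: (etrans _ H); rewrite /clustering_rhs mulmx_sumr summxE.
    apply: eq_bigr => l eil.
    rewrite -scalemxAr mulmxBr mulmxA -repr_mxM ?hG // !mxE -hv /h /=.
    by rewrite !mxE -mulrN opprB.
  have := hsum; move/eqP; rewrite psumr_eq0.
    move=> /allP /(_ j (mem_index_enum _)); rewrite eij /= mulf_eq0.
    by rewrite gt_eqF ?ha //= subr_eq0 => /eqP <-.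
  move=> l eil; apply: mulr_ge0; first exact: ltW (ha eil).
  by rewrite subr_ge0; apply: hmax; apply: Kstep.
have walk s : forall c g, is_walk E c s -> (c, g) \in K -> h (c, g) = M ->
    (sw_end c s, (g * net_voltage rho c s)%g) \in K /\
    h (sw_end c s, (g * net_voltage rho c s)%g) = M.
  elim: s => [|[b j] s IH] c g /=; first by rewrite mulg1.
  rewrite /is_walk /= => /andP[/andP[e sw] /andP[bt al]] Kc hc.
  move: e; rewrite bt => e.
  have [Kj hj] := step (c, g) j Kc hc e.
  have [] := IH j _ _ Kj hj; first by rewrite /is_walk sw al.
  by rewrite sw_end_cons /step_voltage /= mulgA.
case: v0 Kv0 hmax @M step walk => i0 g0 Kv0 hmax M step walk.
have [s1 [/andP[w1 _] e1]] := hr i0.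
have [K1 h1] := walk s1 i0 g0 w1 Kv0 erefl.
move: K1 h1; rewrite e1; set g1 := (g0 * _)%g => K1 h1.
have g1loc : g1 \in local_group E rho r by rewrite Kin in K1.
have : (g1^-1)%g \in dir_local_group E rho r.
  by rewrite -hloc; apply: (@groupVr _ (Group (local_group_set E rho r))).
rewrite inE => /asboolP [w [ww ew fw]].
have [_ h2] := walk w r g1 ww K1 h1.
move: h2; rewrite ew fw mulgV => h2.
move=> i g Kig.
have : h (i, g) <= M by apply: hmax.
by rewrite -h2 /h /= repr_mx1 mul1mx.
Qed.

Lemma clustering_rhsN (y : 'I_N -> 'cV[R]_k) i :
  clustering_rhs rG E rho a (fun j => - y j) i = - clustering_rhs rG E rho a y i.
Proof.
rewrite /clustering_rhs -sumrN; apply: eq_bigr => j _.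
by rewrite mulmxN -scalerN opprB opprK addrC.
Qed.

Lemma harm_eq (r : 'I_N) (y : 'I_N -> 'cV[R]_k) :
  is_root E r -> local_group E rho r = dir_local_group E rho r ->
  (forall i, clustering_rhs rG E rho a y i = 0) ->
  forall i g, g \in Net E rho r i -> rG g *m y i = y r.
Proof.
move=> hr hloc heq i g hg; apply/matrixP => p q; rewrite (ord1 q).
apply/le_anti/andP; split; first exact: harm_le hg.
have heqN j : clustering_rhs rG E rho a (fun j => - y j) j = 0.
  by rewrite clustering_rhsN heq oppr0.
have := harm_le p hr hloc heqN hg.
by rewrite mulmxN !mxE lerN2.
Qed.
End Harm.

Section Ana.
Local Open Scope ring_scope.
Lemma cvg_entry (R : realType) (T : Type) (F : set_system T) (FF : Filter F)
  (m n : nat) (f : T -> 'M[R]_(m, n)) (l : 'M[R]_(m, n)) p q :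
  f x @[x --> F] --> l -> f x p q @[x --> F] --> l p q.
Proof.
move=> /cvgrPdist_le fl; apply/cvgrPdist_le => e e0.
apply: filterS (fl e e0) => x hx; apply: le_trans hx.
rewrite [leRHS]/Num.Def.normr/= mx_normrE.
apply: le_trans; last exact: le_bigmax.
by rewrite !mxE.
Qed.

Lemma deriv_limit0 (R : realType) (y dy : R -> R) (L c : R) :
  (forall t : R, 0 < t -> is_derive t 1 y (dy t)) ->
  y t @[t --> +oo%R] --> L -> dy t @[t --> +oo%R] --> c -> c = 0.
Proof.
move=> hd hy hdy; apply/eqP; apply/negPn/negP => c0.
have e0 : 0 < `|c| / 2 by rewrite divr_gt0 // normr_gt0.
have [M1 [_ hM1]] := (cvgrPdist_lt _ _).1 hdy _ e0.
have e1 : 0 < `|c| / 4 by rewrite divr_gt0 // normr_gt0.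
have [M2 [_ hM2]] := (cvgrPdist_lt _ _).1 hy _ e1.
set mx := Num.max 0 (Num.max M1 M2).
have m0 : 0 <= mx by rewrite le_max lexx.
have m1 : M1 <= mx by rewrite le_max le_max lexx orbT.
have m2 : M2 <= mx by rewrite le_max le_max lexx !orbT.
set t := mx + 1.
have t0 : 0 < t by rewrite /t; lra.
have tM1 : M1 < t by rewrite /t; lra.
have tM2 : M2 < t by rewrite /t; lra.
have [xi xit hxi] : exists2 xi, xi \in `]t, t + 1[ & y (t + 1) - y t = dy xi * (t + 1 - t).
  apply: MVT; first by rewrite ltrDl.
    move=> x /[dup] xt; rewrite in_itv /= => /andP[tx _]; apply: hd.
    exact: lt_trans tx.
  apply: continuous_in_subspaceT => x; rewrite inE /= in_itv /= => /andP[tx _].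
  apply/differentiable_continuous/derivable1_diffP.
  have : is_derive x 1 y (dy x) by apply: hd; exact: lt_le_trans tx.
  by case.
move: xit; rewrite in_itv /= => /andP[txi _].
have h1 := hM1 xi (lt_trans tM1 txi).
have h2 : `|L - y (t + 1)| < `|c| / 4 by apply: hM2; rewrite /t; lra.
have h3 := hM2 t tM2.
have et : t + 1 - t = 1 by rewrite addrAC subrr add0r.
move: hxi; rewrite et mulr1 => hxi.
have tri (u v w : R) : `|u + v - w| <= `|u| + `|v| + `|w|.
  apply: le_trans (ler_normB _ _) _; rewrite lerD2r; exact: ler_normD.
have ec : c = (c - dy xi) + (L - y t) - (L - y (t + 1)) by rewrite -hxi; ring.
have := tri (c - dy xi) (L - y t) (L - y (t + 1)); rewrite -ec.
lra.
Qed.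

Lemma cvg_sumR (R : realType) (I : finType) (P : pred I) (f : I -> R -> R) (l : I -> R) :
  (forall i, P i -> f i t @[t --> +oo%R] --> l i) ->
  (\sum_(i | P i) f i t) @[t --> +oo%R] --> \sum_(i | P i) l i.
Proof. by move=> h; apply: cvg_big => //; exact: add_continuous. Qed.

Lemma cvg_mulcR (R : realType) (f : R -> R) (a l : R) :
  f t @[t --> +oo%R] --> l -> a * f t @[t --> +oo%R] --> a * l.
Proof. by move=> h; apply: cvgM => //; exact: cvg_cst. Qed.

Lemma equilibrium (R : realType) (N k : nat) (gT : finGroupType) (G : {group gT})
  (rG : mx_representation R G k) (E : rel 'I_N) (rho : 'I_N -> 'I_N -> gT)
  (a : 'I_N -> 'I_N -> R) (x : 'I_N -> R -> 'cV[R]_k) (xs : 'I_N -> 'cV[R]_k) :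
  (forall i (t : R), (0 < t)%R ->
        is_derive t 1%R (x i) (clustering_rhs rG E rho a (fun j => x j t) i)) ->
  (forall i, x i t @[t --> +oo%R] --> xs i) ->
  forall i, clustering_rhs rG E rho a xs i = 0.
Proof.
move=> hder hcvg i; apply/matrixP => p q; rewrite (ord1 q) [RHS]mxE.
apply: (@deriv_limit0 R (fun t => x i t p 0)
  (fun t => clustering_rhs rG E rho a (fun j => x j t) i p 0) (xs i p 0)).
- move=> t t0; have [dx dD] := hder i t t0.
  apply: DeriveDef; first exact: (derivable_mxP _ _ _).1 dx p 0.
  by have := derive_mx dx; rewrite dD => /matrixP/(_ p 0); rewrite mxE.
- exact: cvg_entry.
- rewrite /clustering_rhs summxE.
  under eq_cvg do rewrite summxE.
  apply: cvg_sumR => j eij.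
  under eq_cvg do rewrite !mxE.
  rewrite !mxE; apply: cvg_mulcR; apply: cvgB; last exact: cvg_entry.
  apply: cvg_sumR => l _; apply: cvg_mulcR; exact: cvg_entry.
Qed.
End Ana.
Unset Implicit Arguments.

Theorem corollary4
  (R : realType) (N k : nat) (gT : finGroupType) (G : {group gT})
  (rG : mx_representation R G k)
  (E : rel 'I_N) (rho : 'I_N -> 'I_N -> gT) :
  (* point group in dimension k: G faithfully represented by orthogonal matrices *)
  mx_faithful rG ->
  (forall g, g \in G -> (rG g *m (rG g)^T = 1%:M)%R) ->
  (* voltage graph on a simple digraph *)
  simple_digraph E ->
  (forall i j, E i j -> rho i j \in G) ->
  (* rooted, and G_i = G_i^* at some root v_i *)
  (exists r, is_root E r /\ local_group E rho r = dir_local_group E rho r) ->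
  let P := adapted_partition E rho in
  (* part (1) *)
  (forall i : 'I_N,
     (forall j l : 'I_N,
        (exists2 B, B \in P & (j \in B) && (l \in B)) <-> Net E rho i j = Net E rho i l)
     /\ #|P| = #|NetV E rho i| %/ #|local_group E rho i|
     /\ #|P| <= #|G| %/ #|local_group E rho i|
     /\ (#|P| = #|G| %/ #|local_group E rho i| <-> vg_nondegenerate E rho G))
  /\
  (* part (2) *)
  (forall (a : 'I_N -> 'I_N -> R) (x : 'I_N -> R -> 'cV[R]_k) (xs : 'I_N -> 'cV[R]_k),
     (forall i j, E i j -> (0 < a i j)%R) ->
     (forall i (t : R), (0 < t)%R ->
        is_derive t 1%R (x i) (clustering_rhs rG E rho a (fun j => x j t) i)) ->
     (forall i, x i t @[t --> +oo%R] --> xs i) ->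
     forall i j, (exists2 B, B \in P & (i \in B) && (j \in B)) -> xs i = xs j).
Proof.
move=> _ _ _ hG [r [hr hloc]] P.
have wc : weakly_connected E by apply: (root_wc rho); exists r.
split; first by move=> i; exact: (part1 hG wc i).
move=> a x xs ha hder hcvg i j hB.
have heq := equilibrium hder hcvg.
have eqN : Net E rho r i = Net E rho r j.
  by have [+ _] := part1 hG wc r; move=> /(_ i j) [+ _]; apply.
have [g hg] := Net_nonempty rho r i wc.
have hg' : g \in Net E rho r j by rewrite -eqN.
have gG : g \in G by move: hg; apply/fintype.subsetP/Net_sub.
have e1 := harm_eq hG ha hr hloc heq hg.
have e2 := harm_eq hG ha hr hloc heq hg'.
have inv z : (z = rG (g^-1)%g *m (rG g *m z))%R.
  by rewrite mulmxA -repr_mxM ?groupV // mulVg repr_mx1 mul1mx.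
by rewrite (inv _ (xs i)) (inv _ (xs j)) e1 e2.
Qed.
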